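(* Consider the $N$-node uplink system described in the context, initialized with $d_{0,i}=D_{0,i}=1$ for all $i$ (so the AP's initial belief of each local age is the point mass at $1$), and operated under an arbitrary scheduling policy. Then for every slot $t\ge 1$ and every node $i$ there exist positive integers $k,m$ such that $D_{t,i}=k+m$ and the AP's belief $\bm{b}_{t,i}$ of the local age of node $i$ equals $\bm{c}_i(k,m)$, where $\bm{c}_i(k,m)=[c(d)]_{d\ge1}$ is defined by $c(d)=\lambda_i(1-\lambda_i)^{d-1}$ for $1\le d\le m$, $c(k+m)=(1-\lambda_i)^m$, and $c(d)=0$ for all other $d\ge 1$.
   Context: System: $N$ nodes $i=1,\dots,N$ and one access point (AP); time slots $t=0,1,2,\dots$. Node $i$ receives a status update in each slot independently with probability $\lambda_i\in(0,1]$ (independent across nodes and slots) and keeps only the latest one. Local age: $d_{t+1,i}=1$ if an update arrives at node $i$ in slot $t$, else $d_{t+1,i}=d_{t,i}+1$. In each slot the AP schedules at most one node; a scheduled node $i$'s transmission succeeds with probability $p_i\in(0,1]$ independently. If node $i$ is scheduled and succeeds in slot $t$, the AP observes $d_{t,i}$ and $D_{t+1,i}=d_{t,i}+1$; otherwise the AP observes nothing about $d_{t,i}$ and $D_{t+1,i}=D_{t,i}+1$. A scheduling policy chooses the action in each slot as a function of the AP's past actions and observations. The belief $\bm{b}_{t,i}=[b_{t,i}(d)]_{d\ge1}$ is the conditional distribution $b_{t,i}(d)=\Pr(d_{t,i}=d\mid \text{AP history of actions and observations up to slot } t-1)$; $D_{t,i}$ is known to the AP. *)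

(* Defs.v *)
From mathcomp Require Import all_boot all_order all_algebra.
Set Implicit Arguments. Unset Strict Implicit. Unset Printing Implicit Defensive.
Import Order.TTheory GRing.Theory Num.Theory.
Local Open Scope ring_scope.

Section System.
Variable N : nat.

(* One history entry: the action of the slot (None = nobody scheduled,
   Some j = node j scheduled) and the observation of the slot
   (Some d = AP observed local age d, None = nothing observed). *)
Definition entry := (option 'I_N * option nat)%type.
Definition history := seq entry.
Definition policy := history -> option 'I_N.

(* alpha s i : an update arrives at node i in slot s.
   sigma s i : a transmission of node i in slot s would succeed. *)
Fixpoint localAge (alpha : nat -> 'I_N -> bool) (s : nat) (i : 'I_N) : nat :=
  match s with
  | 0 => 1
  | s'.+1 => if alpha s' i then 1 else (localAge alpha s' i).+1
  end.

(* AP history of actions and observations in slots 0 .. s-1. *)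
Fixpoint hist (pi : policy) (alpha sigma : nat -> 'I_N -> bool) (s : nat)
  : history :=
  match s with
  | 0 => [::]
  | s'.+1 =>
    let h := hist pi alpha sigma s' in
    let a := pi h in
    let o := match a with
             | Some j => if sigma s' j then Some (localAge alpha s' j) else None
             | None => None
             end in
    rcons h (a, o)
  end.

Definition Dage (h : history) (i : 'I_N) : nat :=
  foldl (fun D (e : entry) =>
           match e with
           | (Some j, Some d) => if j == i then d.+1 else D.+1
           | _ => D.+1
           end) 1 h.

(* Finite-horizon sample space: arrivals and success bits for slots < t. *)
Definition bits (t : nat) := {ffun 'I_t -> {ffun 'I_N -> bool}}.
Definition omega (t : nat) := (bits t * bits t)%type.

Definition ext (t : nat) (f : bits t) : nat -> 'I_N -> bool :=
  fun s i => match insub s with Some s' => f s' i | None => false end.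

Variable R : realFieldType.
Variables (lam p : 'I_N -> R).

Definition weight (t : nat) (w : omega t) : R :=
  \prod_(s : 'I_t) \prod_(j : 'I_N)
     ((if w.1 s j then lam j else 1 - lam j) *
      (if w.2 s j then p j else 1 - p j)).

Definition Pr (t : nat) (E : pred (omega t)) : R :=
  \sum_(w : omega t | E w) weight w.

Definition histProb (pi : policy) (t : nat) (h : history) : R :=
  Pr (fun w : omega t => hist pi (ext w.1) (ext w.2) t == h).

Definition belief (pi : policy) (t : nat) (i : 'I_N) (h : history) (d : nat) : R :=
  Pr (fun w : omega t => (localAge (ext w.1) t i == d)
                         && (hist pi (ext w.1) (ext w.2) t == h))
  / histProb pi t h.
End System.

Definition cvec (R : realFieldType) (l : R) (k m d : nat) : R :=
  if ((1 <= d) && (d <= m))%N then l * (1 - l) ^+ d.-1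
  else if d == (k + m)%N then (1 - l) ^+ m
  else 0.

(* Main.v *)
Require Import Defs.
From mathcomp Require Import all_boot all_order all_algebra.
From mathcomp Require Import ring lra zify.
Set Implicit Arguments. Unset Strict Implicit. Unset Printing Implicit Defensive.
Import Order.TTheory GRing.Theory Num.Theory.
Local Open Scope ring_scope.

Section Proof.
Variables (R : realFieldType) (N : nat) (lam p : 'I_N -> R) (pi : policy N).

Definition BB := {ffun 'I_N -> bool}.

Definition joinb t (g : bits N t) (b : BB) : bits N t.+1 :=
  [ffun s : 'I_t.+1 => if (insub (val s) : option 'I_t) is Some s' then g s' else b].

Lemma joinb_widen t g b (s : 'I_t) : joinb g b (widen_ord (leqnSn t) s) = g s.
Proof. by rewrite ffunE /= valK. Qed.

Lemma joinb_max t (g : bits N t) b : joinb g b ord_max = b.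
Proof. by rewrite ffunE /= insubN // ltnn. Qed.

Lemma ext_join_lt t (g : bits N t) b (s : nat) j : (s < t)%N -> ext (joinb g b) s j = ext g s j.
Proof.
move=> lt; rewrite /ext.
have lt1 : (s < t.+1)%N by apply: ltnW.
rewrite (insubT (fun x => x < t.+1)%N lt1) (insubT (fun x => x < t)%N lt).
have -> : (Sub s lt1 : 'I_t.+1) = widen_ord (leqnSn t) (Sub s lt) by apply: val_inj.
by rewrite joinb_widen.
Qed.

Lemma ext_join_t t (g : bits N t) b j : ext (@joinb t g b) t j = b j.
Proof.
rewrite /ext (insubT (fun x => x < t.+1)%N (ltnSn t)).
have -> : (Sub t (ltnSn t) : 'I_t.+1) = ord_max by apply: val_inj.
by rewrite joinb_max.
Qed.

Definition splitb t (f : bits N t.+1) : bits N t * BB :=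
  ([ffun s : 'I_t => f (widen_ord (leqnSn t) s)], f ord_max).

Lemma sum_bitsS t (F : bits N t.+1 -> R) :
  \sum_(f : bits N t.+1) F f = \sum_(g : bits N t) \sum_(b : BB) F (joinb g b).
Proof.
rewrite pair_big /= (reindex (fun gb : bits N t * BB => joinb gb.1 gb.2)) //=.
apply: onW_bij; exists (@splitb t).
  case=> g b; rewrite /splitb /= joinb_max; congr (_, _).
  by apply/ffunP => s; rewrite ffunE joinb_widen.
move=> f; apply/ffunP => s; rewrite /splitb /= ffunE.
case: insubP => [u _ eu|].
  by rewrite ffunE; congr (f _); apply: val_inj.
rewrite -leqNgt => hs; congr (f _); apply: val_inj => /=.
by apply/eqP; rewrite eqn_leq hs -ltnS ltn_ord.
Qed.

Lemma sum_omega t (F : omega N t -> R) :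
  \sum_w F w = \sum_(a : bits N t) \sum_(b : bits N t) F (a, b).
Proof. by rewrite pair_big; apply: eq_bigr => -[]. Qed.

Lemma weight_join t (g1 g2 : bits N t) a b :
  weight lam p (@joinb t g1 a, joinb g2 b) = weight lam p (g1, g2) *
   \prod_j ((if a j then lam j else 1 - lam j) * (if b j then p j else 1 - p j)).
Proof.
rewrite /weight big_ord_recr /=; congr (_ * _).
  by apply: eq_bigr => s _; rewrite !joinb_widen.
by rewrite !joinb_max.
Qed.

Lemma localAge_eq (a a' : nat -> 'I_N -> bool) t j :
  (forall s j, (s < t)%N -> a s j = a' s j) -> localAge a t j = localAge a' t j.
Proof.
elim: t => [//|t IH] H /=.
rewrite H // IH // => s k lt; apply: H; exact: ltnW.
Qed.

Lemma hist_eq (a a' s s' : nat -> 'I_N -> bool) t :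
  (forall u j, (u < t)%N -> a u j = a' u j) ->
  (forall u j, (u < t)%N -> s u j = s' u j) ->
  hist pi a s t = hist pi a' s' t.
Proof.
elim: t => [//|t IH] Ha Hs /=.
have -> : hist pi a s t = hist pi a' s' t.
  by apply: IH => u j lt; [apply: Ha | apply: Hs]; apply: ltnW.
case: (pi _) => [j|//].
rewrite Hs // (@localAge_eq a a') // => u k lt; apply: Ha; exact: ltnW.
Qed.


Definition Ex t (f : 'I_N -> nat -> R) (h : history N) : R :=
  \sum_(w : omega N t | hist pi (ext w.1) (ext w.2) t == h)
     weight lam p w * \prod_j f j (localAge (ext w.1) t j).

Definition gf (f : 'I_N -> nat -> R) j n := lam j * f j 1%N + (1 - lam j) * f j n.+1.
Definition qf j0 (o : option nat) (n : nat) : R :=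
  p j0 * (Some n == o)%:R + (1 - p j0) * (None == o)%:R.
Definition rf (x : option 'I_N) o j n : R :=
  if x is Some j0 then (if j0 == j then qf j0 o n else 1) else 1.
Definition cf (x : option 'I_N) (o : option nat) : R :=
  if x is None then (None == o)%:R else 1.

Lemma sum_a (L : 'I_N -> nat) (f : 'I_N -> nat -> R) :
  \sum_(a : BB) (\prod_j (if a j then lam j else 1 - lam j)) *
      \prod_j f j (if a j then 1%N else (L j).+1) = \prod_j gf f j (L j).
Proof.
rewrite (eq_bigr (fun a : BB => \prod_j ((if a j then lam j else 1 - lam j) *
      f j (if a j then 1%N else (L j).+1)))); last by move=> a _; rewrite big_split.
rewrite -(bigA_distr_bigA (fun j c => (if c then lam j else 1 - lam j) *
      f j (if c then 1%N else (L j).+1))).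
by apply: eq_bigr => j _; rewrite big_bool.
Qed.

Lemma sum_b (L : 'I_N -> nat) x o :
  \sum_(b : BB) (\prod_j (if b j then p j else 1 - p j)) *
     ((match x with Some j => if b j then Some (L j) else None | None => None end) == o)%:R
  = cf x o * \prod_j rf x o j (L j).
Proof.
case: x => [j0|] /=.
  rewrite mul1r.
  rewrite (eq_bigr (fun b : BB => \prod_j ((if b j then p j else 1 - p j) *
      (if j == j0 then ((if b j then Some (L j) else None) == o)%:R else 1)))); last first.
    move=> b _; rewrite big_split /=; congr (_ * _).
    by rewrite (bigD1 j0) //= eqxx big1 ?mulr1 // => j /negbTE ->.
  rewrite -(bigA_distr_bigA (fun j c => (if c then p j else 1 - p j) *
      (if j == j0 then ((if c then Some (L j) else None) == o)%:R else 1))).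
  apply: eq_bigr => j _; rewrite big_bool /=.
  case: (eqVneq j j0) => [->|ne]; first by [].
  by rewrite !mulr1 addrC subrK.
rewrite -big_distrl /= mulrC; congr (_ * _).
rewrite -(bigA_distr_bigA (fun j c => if c then p j else 1 - p j)) /=.
by apply: eq_bigr => j _; rewrite big_bool /= addrC subrK.
Qed.

Lemma core t (g1 g2 : bits N t) f h' x o :
  \sum_(a : BB) \sum_(b : BB)
    (if hist pi (ext (joinb g1 a)) (ext (joinb g2 b)) t.+1 == rcons h' (x, o)
     then weight lam p (joinb g1 a, joinb g2 b) *
          \prod_j f j (localAge (ext (joinb g1 a)) t.+1 j) else 0)
  = (pi h' == x)%:R * cf x o *
    (if hist pi (ext g1) (ext g2) t == h'
     then weight lam p (g1, g2) *
          \prod_j (gf f j (localAge (ext g1) t j) * rf x o j (localAge (ext g1) t j))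
     else 0).
Proof.
set H := hist pi (ext g1) (ext g2) t.
set L := fun j => localAge (ext g1) t j.
have eL : forall a j, localAge (ext (joinb g1 a)) t.+1 j = if a j then 1%N else (L j).+1.
  move=> a j /=; rewrite ext_join_t (@localAge_eq _ (ext g1)) //.
  by move=> s k lt; rewrite ext_join_lt.
have eH : forall a b, hist pi (ext (joinb g1 a)) (ext (joinb g2 b)) t.+1 =
   rcons H (pi H, match pi H with Some j => if b j then Some (L j) else None
                                 | None => None end).
  move=> a b /=.
  have -> : hist pi (ext (joinb g1 a)) (ext (joinb g2 b)) t = H.
    by apply: hist_eq => u j lt; rewrite ext_join_lt.
  case: (pi H) => [j|//]; rewrite ext_join_t.
  rewrite (@localAge_eq _ (ext g1)) // => s k lt; by rewrite ext_join_lt.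
have eP : forall a, \prod_j f j (localAge (ext (joinb g1 a)) t.+1 j) =
    \prod_j f j (if a j then 1%N else (L j).+1).
  by move=> a; apply: eq_bigr => j _; rewrite eL.
set W := weight lam p (g1, g2).
pose Ob := fun b : BB => (match x with Some j => if b j then Some (L j) else None
                 | None => None end == o)%:R : R.
have E : forall a b,
   (if hist pi (ext (joinb g1 a)) (ext (joinb g2 b)) t.+1 == rcons h' (x, o)
     then weight lam p (joinb g1 a, joinb g2 b) *
          \prod_j f j (localAge (ext (joinb g1 a)) t.+1 j) else 0)
   = ((H == h')%:R * (pi H == x)%:R * W) *
     (((\prod_j (if a j then lam j else 1 - lam j)) *
      \prod_j f j (if a j then 1%N else (L j).+1)) *
      ((\prod_j (if b j then p j else 1 - p j)) * Ob b)).
  move=> a b; rewrite eH eqseq_rcons. rewrite xpair_eqE eP weight_join big_split /= -/W /Ob.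
  case: (H == h'); last by rewrite /= !mul0r.
  case: (eqVneq (pi H) x) => [->|nx] /=; last by rewrite mulr0 !mul0r.
  by case: eqP => _ /=; ring.
rewrite (eq_bigr (fun a : BB => ((H == h')%:R * (pi H == x)%:R * W) *
      ((\prod_j (if a j then lam j else 1 - lam j)) *
      \prod_j f j (if a j then 1%N else (L j).+1)) *
      \sum_(b : BB) ((\prod_j (if b j then p j else 1 - p j)) * Ob b))); last first.
  by move=> a _; rewrite mulr_sumr; apply: eq_bigr => b _; rewrite E mulrA.
rewrite -mulr_suml -mulr_sumr sum_a /Ob sum_b.
case: (eqVneq H h') => [->|_] /=; last by rewrite !(mul0r, mulr0).
rewrite big_split /=; ring.
Qed.

Lemma Ex_step t f h' x o :
  Ex t.+1 f (rcons h' (x, o)) =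
  (pi h' == x)%:R * cf x o * Ex t (fun j n => gf f j n * rf x o j n) h'.
Proof.
rewrite /Ex big_mkcond sum_omega sum_bitsS.
rewrite [X in _ = _ * X]big_mkcond [X in _ = _ * X]sum_omega mulr_sumr.
apply: eq_bigr => g1 _.
under [X in X = _]eq_bigr => a _ do rewrite sum_bitsS.
rewrite exchange_big mulr_sumr; apply: eq_bigr => g2 _ /=.
exact: core.
Qed.

Definition ce (l : R) (km : nat * nat) (f : nat -> R) : R :=
  \sum_(i < km.2) l * (1 - l) ^+ i * f i.+1 + (1 - l) ^+ km.2 * f (km.1 + km.2)%N.

Definition upd (km : nat * nat) (e : entry N) (j : 'I_N) : nat * nat :=
  match e with
  | (Some j0, Some d0) => if j0 == j then (d0, 1%N) else (km.1, km.2.+1)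
  | _ => (km.1, km.2.+1)
  end.

Definition kmf (h : history N) : 'I_N -> nat * nat :=
  foldl (fun st e => fun j => upd (st j) e j) (fun _ => (1%N, 0%N)) h.

Lemma kmf_rcons h e j : kmf (rcons h e) j = upd (kmf h j) e j.
Proof. by rewrite /kmf foldl_rcons. Qed.

Lemma ce_ext l km f1 f2 : (forall n, f1 n = f2 n) -> ce l km f1 = ce l km f2.
Proof. by move=> E; rewrite /ce E; congr (_ + _); apply: eq_bigr => i _; rewrite E. Qed.

Lemma ce_scale l km f c : ce l km (fun n => f n * c) = ce l km f * c.
Proof. by rewrite /ce mulrDl big_distrl /= mulrA; congr (_ + _); apply: eq_bigr => i _; rewrite mulrA. Qed.

Lemma ce_step l k m f :
  ce l (k, m.+1) f = l * f 1%N + (1 - l) * ce l (k, m) (fun n => f n.+1).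
Proof.
rewrite /ce /= big_ord_recl /= expr0 mulr1 -addrA; congr (_ + _).
rewrite mulrDr big_distrr /= addnS; congr (_ + _).
  by apply: eq_bigr => i _; rewrite /bump /= exprS; ring.
by rewrite exprS mulrA.
Qed.

Lemma ce_one l km : ce l km (fun _ => 1) = 1.
Proof.
case: km => k m; elim: m => [|m IH]; first by rewrite /ce big_ord0 add0r mulr1.
by rewrite ce_step IH; ring.
Qed.

Lemma ce_ind l km d0 G :
  ce l km (fun n => (n == d0)%:R * G n) = ce l km (fun n => (n == d0)%:R) * G d0.
Proof.
rewrite -ce_scale; apply: ce_ext => n.
by case: eqP => [->|_]; rewrite ?mul0r.
Qed.

Lemma ce_add l km f1 f2 : ce l km (fun n => f1 n + f2 n) = ce l km f1 + ce l km f2.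
Proof.
rewrite /ce.
rewrite (eq_bigr (fun i : 'I_km.2 => l * (1 - l) ^+ i * f1 i.+1 + l * (1 - l) ^+ i * f2 i.+1));
  last by move=> i _; rewrite mulrDr.
rewrite big_split /=; ring.
Qed.

Lemma ce_gf f j k m :
  ce (lam j) (k, m) (gf f j) = ce (lam j) (k, m.+1) (f j).
Proof.
rewrite ce_step.
rewrite (@ce_ext _ _ _ (fun n => (fun _ => 1) n * (lam j * f j 1%N) +
                                 (fun n => f j n.+1) n * (1 - lam j))); last first.
  by move=> n; rewrite /gf; ring.
by rewrite ce_add !ce_scale ce_one; ring.
Qed.

Definition one : 'I_N -> nat -> R := fun _ _ => 1.

Lemma perj_const f x o j k m C : (forall n, rf x o j n = C) ->
  upd (k, m) (x, o) j = (k, m.+1) ->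
  ce (lam j) (k, m) (fun n => gf f j n * rf x o j n) =
  ce (lam j) (k, m) (fun n => gf one j n * rf x o j n) *
  ce (lam j) (upd (k, m) (x, o) j) (f j).
Proof.
move=> HC HU; rewrite HU.
rewrite (@ce_ext _ _ _ (fun n => gf f j n * C)); last by move=> n; rewrite HC.
rewrite (@ce_ext _ _ (fun n => gf one j n * rf x o j n) (fun n => (fun _ => 1) n * C));
  last by move=> n; rewrite HC /gf /one; ring.
by rewrite !ce_scale ce_one ce_gf; ring.
Qed.

Lemma perj f x o j k m :
  ce (lam j) (k, m) (fun n => gf f j n * rf x o j n) =
  ce (lam j) (k, m) (fun n => gf one j n * rf x o j n) *
  ce (lam j) (upd (k, m) (x, o) j) (f j).
Proof.
case: x => [j0|]; last by apply: (@perj_const _ _ _ _ _ _ 1).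
case: (eqVneq j0 j) => [<-|ne]; last first.
  apply: (@perj_const _ _ _ _ _ _ 1); first by move=> n; rewrite /rf (negbTE ne).
  by case: o => [d0|] //=; rewrite (negbTE ne).
case: o => [d0|]; last first.
  apply: (@perj_const _ _ _ _ _ _ (1 - p j0)) => // n; rewrite /rf eqxx /qf /=; ring.
rewrite /upd eqxx.
rewrite (@ce_ext _ _ _ (fun n => (n == d0)%:R * (gf f j0 n * p j0))); last first.
  by move=> n; rewrite /rf eqxx /qf /=; ring.
rewrite (@ce_ext _ _ (fun n => gf one j0 n * rf (Some j0) (Some d0) j0 n)
                     (fun n => (n == d0)%:R * (gf one j0 n * p j0))); last first.
  by move=> n; rewrite /rf eqxx /qf /=; ring.
rewrite !ce_ind ce_step /ce big_ord0 add0r expr0 mul1r addn0 /gf /one /=.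
ring.
Qed.

Lemma main t : forall h f, Ex t f h = Ex t one h * \prod_j ce (lam j) (kmf h j) (f j).
Proof.
elim: t => [|t IH] h f.
  rewrite /Ex mulr_suml; apply: eq_bigr => w /eqP <- /=.
  rewrite [X in _ = _ * X * _]big1 // mulr1; congr (_ * _); apply: eq_bigr => j _.
  by rewrite /kmf /ce /= big_ord0 add0r expr0 mul1r.

case/lastP: h => [|h' [x o]].
  have E0 : forall g, Ex t.+1 g [::] = 0.
    by move=> g; rewrite /Ex big_pred0 // => w /=; case: (hist pi (ext w.1) (ext w.2) t).
  by rewrite !E0 mul0r.
rewrite !Ex_step (IH h' (fun j n => gf f j n * rf x o j n))
  (IH h' (fun j n => gf one j n * rf x o j n)).
rewrite -!mulrA; congr (_ * (_ * (_ * _))); rewrite -big_split; apply: eq_bigr => j _ /=.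
rewrite kmf_rcons; case: (kmf h' j) => k m; exact: perj.

Qed.

Lemma sum_ind (F : nat -> R) m d :
  \sum_(i < m) F i * (i == d :> nat)%:R = if (d < m)%N then F d else 0.
Proof.
elim: m => [|m IH]; first by rewrite big_ord0.
rewrite big_ord_recr /= IH.
case: (ltngtP d m) => [lt|gt|->] /=.
- by rewrite (leqW lt) mulr0 addr0.
- have -> : (d < m.+1)%N = false by rewrite ltnNge gt.
  by rewrite mulr0 addr0.
- by rewrite ltnSn mulr1 add0r.
Qed.

Lemma ce_cvec (l : R) k m d : (0 < k)%N -> (0 < d)%N ->
  ce l (k, m) (fun n => (n == d)%:R) = cvec l k m d.
Proof.
case: d => [//|d] k0 _; rewrite /ce /cvec /=.
rewrite (eq_bigr (fun i : 'I_m => l * (1 - l) ^+ i * (i == d :> nat)%:R)) //.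
rewrite (sum_ind (fun i => l * (1 - l) ^+ i)) eq_sym.
case: (ltnP d m) => H.
  have -> : (d.+1 == (k + m)%N) = false.
    by apply/negbTE/eqP; lia.
  by rewrite mulr0 addr0.
rewrite add0r; case: eqP => _; by rewrite ?mulr1 ?mulr0.
Qed.

Lemma localAge_pos (a : nat -> 'I_N -> bool) s j : (0 < localAge a s j)%N.
Proof. by case: s => [|s] //=; case: (a s j). Qed.

Lemma kmf_hist t al si j :
  (0 < (kmf (hist pi al si t) j).1)%N /\
  ((0 < t)%N -> (0 < (kmf (hist pi al si t) j).2)%N).
Proof.
elim: t => [|t [IH1 IH2]]; first by rewrite /kmf.
rewrite /= kmf_rcons /upd.
case: (pi _) => [j0|] /=; last by split.
case: (si t j0) => /=; last by split.
case: (j0 == j) => /=; last by split.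
by split => //; apply: localAge_pos.
Qed.

Lemma Dage_kmf h j : Dage h j = ((kmf h j).1 + (kmf h j).2)%N.
Proof.
elim/last_ind: h => [//|h e IH].
rewrite /Dage foldl_rcons -/(Dage h j) kmf_rcons IH.
case: e => [[j0|] [d0|]] /=; try by rewrite addnS.
by case: (j0 == j) => /=; [rewrite addn1 | rewrite addnS].
Qed.

Lemma histProb_Ex t h : histProb lam p pi t h = Ex t one h.
Proof. by rewrite /histProb /Pr /Ex; apply: eq_bigr => w _; rewrite big1 ?mulr1. Qed.

Lemma Pr_Ex t i h d :
  Pr lam p (fun w : omega N t => (localAge (ext w.1) t i == d)
                         && (hist pi (ext w.1) (ext w.2) t == h))
  = Ex t (fun j n => if j == i then (n == d)%:R else 1) h.
Proof.
rewrite /Pr /Ex big_mkcond [RHS]big_mkcond; apply: eq_bigr => w _.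
rewrite (bigD1 i) //= eqxx big1 ?mulr1; last by move=> j /negbTE ->.
case: (localAge _ t i == d); case: (hist _ _ _ t == h) => /=; by rewrite ?mulr1 ?mulr0.
Qed.

End Proof.

Theorem corollary1 (R : realFieldType) (N : nat) (lam p : 'I_N -> R)
  (hlam : forall i, 0 < lam i <= 1) (hp : forall i, 0 < p i <= 1)
  (pi : policy N) (t : nat) (i : 'I_N) (h : history N) :
  (0 < t)%N -> 0 < histProb lam p pi t h ->
  exists k m : nat, [/\ (0 < k)%N, (0 < m)%N, Dage h i = (k + m)%N &
    forall d : nat, (0 < d)%N -> belief lam p pi t i h d = cvec (lam i) k m d].
Proof.
move=> t0 hP.
have [w /eqP hw] : exists w : omega N t, hist pi (ext w.1) (ext w.2) t == h.
  case: (pickP (fun w : omega N t => hist pi (ext w.1) (ext w.2) t == h)) => [w hw|none].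
    by exists w.
  by move: hP; rewrite /histProb /Pr big_pred0 // ltxx.
have [k1 m1] := kmf_hist pi t (ext w.1) (ext w.2) i.
rewrite hw in k1 m1.
have m1' := m1 t0.
have HD := Dage_kmf h i.
move: k1 m1' HD; case E: (kmf h i) => [k m] /= k1 m1' HD.
exists k, m; split => // d d0.
rewrite /belief Pr_Ex main -histProb_Ex (bigD1 i) //= E.
rewrite big1; last first.
  move=> j /negbTE nj; rewrite (@ce_ext _ _ _ _ (fun _ => 1)) ?ce_one // => n.
  by rewrite nj.
rewrite (@ce_ext _ _ _ _ (fun n => (n == d)%:R)); last by move=> n; rewrite eqxx.
rewrite ce_cvec // mulr1 mulrC mulrA mulVf ?mul1r //.
by rewrite gt_eqF.
Qed.
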